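(* Let $f(X)=N(N-1)\sum_{i=1}^{\ell}\beta_i\,t(H_i,X)$ be a subgraph-counting function and let $m_i=|E(H_i)|$. Then for all $X,Y\in[0,1]^n$, $$\|\nabla f(X)-\nabla f(Y)\|_1\le\sum_{i=1}^{\ell}|\beta_i|\,m_i(m_i-1)\,\|X-Y\|_1.$$
   Context: $n=\binom N2$; $X\in[0,1]^n$ is identified with a symmetric $N\times N$ matrix with zero diagonal, entries indexed by unordered pairs. For a finite simple graph $H$ on $[m]$, $t(H,X)=\frac{1}{N(N-1)\cdots(N-m+1)}\sum_q\prod_{\{l,l'\}\in E(H)}X_{q_lq_{l'}}$ over injective $q:[m]\to[N]$. For an index $e$, $\partial_ef(X)=\frac12(f(X^{e\leftarrow1})-f(X^{e\leftarrow0}))$, $\nabla f(X)=(\partial_ef(X))_e\in\mathbb R^n$. $\|\cdot\|_1$ is the $\ell^1$ norm on $\mathbb R^n$. *)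

(* Defs.v *)
From HB Require Import structures.
From mathcomp Require Import all_boot all_order all_algebra.
Set Implicit Arguments. Unset Strict Implicit. Unset Printing Implicit Defensive.
Import Order.TTheory GRing.Theory Num.Theory.
Local Open Scope ring_scope.

(* A finite simple graph on the vertex set [m] = 'I_m: its edge set is a set of
   2-element subsets of 'I_m (no loops, no multiple edges). *)
Record sgraph := SGraph {
  gv : nat;
  gE : {set {set 'I_gv}};
  gE2 : forall e, e \in gE -> #|e| = 2%N }.

Definition nedges (H : sgraph) : nat := #|gE H|.

(* index set of [0,1]^n, n = binom N 2: unordered pairs {a,b} of distinct a b in [N] *)
Definition upair (N : nat) := {e : {set 'I_N} | #|e| == 2%N}.

Definition vec (R : Type) (N : nat) := {ffun upair N -> R}.

(* entry X_{s} for a set s of vertices: X_e if s is an unordered pair e, else 0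
   (in particular the diagonal X_{aa} = X_{{a}} is 0) *)
Definition Xent (R : ringType) (N : nat) (X : vec R N) (s : {set 'I_N}) : R :=
  if @insub _ _ (upair N) s is Some e then X e else 0.

Definition tdens (R : fieldType) (N : nat) (H : sgraph) (X : vec R N) : R :=
  (\sum_(q : {ffun 'I_(gv H) -> 'I_N} | injectiveb q)
      \prod_(e in gE H) Xent X (q @: e)) / (N ^_ (gv H))%:R.

Definition fcount (R : fieldType) (N l : nat) (beta : 'I_l -> R)
  (H : 'I_l -> sgraph) (X : vec R N) : R :=
  (N * (N - 1))%:R * \sum_(i < l) beta i * tdens (H i) X.

Definition upd (R : Type) (N : nat) (X : vec R N) (e : upair N) (c : R) : vec R N :=
  [ffun e' => if e' == e then c else X e'].

Definition dpart (R : fieldType) (N : nat) (f : vec R N -> R) (e : upair N)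
  (X : vec R N) : R := (f (upd X e 1) - f (upd X e 0)) / 2%:R.

Definition grad (R : fieldType) (N : nat) (f : vec R N -> R) (X : vec R N)
  : vec R N := [ffun e => dpart f e X].

Definition norm1 (R : numDomainType) (N : nat) (v : vec R N) : R :=
  \sum_(e : upair N) `|v e|.

Definition in_cube (R : numDomainType) (N : nat) (X : vec R N) : Prop :=
  forall e, 0 <= X e <= 1.

(* Main.v *)
Require Import Defs.
From HB Require Import structures.
From mathcomp Require Import all_boot all_order all_algebra.
From mathcomp Require Import ring.
Import Order.TTheory GRing.Theory Num.Theory.
Local Open Scope ring_scope.
Set Implicit Arguments. Unset Strict Implicit.

Section S.
Variable R : realFieldType.
Variable N : nat.

Lemma sum_upair (g : {set 'I_N} -> R) :
  \sum_(e : upair N) g (val e) = \sum_(s : {set 'I_N} | #|s| == 2%N) g s.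
Proof.
symmetry.
rewrite (reindex_omap (val : upair N -> {set 'I_N}) insub); last first.
  by move=> s Hs; rewrite (insubT (fun s : {set 'I_N} => #|s| == 2%N) Hs).
apply: eq_bigl => -[s Hs] /=; rewrite Hs /=.
by rewrite (insubT (fun s : {set 'I_N} => #|s| == 2%N) Hs) /= eqxx.
Qed.

Lemma Xent_val (X : vec R N) (e : upair N) : Xent X (val e) = X e.
Proof. by rewrite /Xent valK. Qed.

Lemma Xent_upd (X : vec R N) e c s :
  Xent (upd X e c) s = if s == val e then c else Xent X s.
Proof.
rewrite /Xent; case: insubP => [u Hu <-|Hs].
  by rewrite /upd ffunE (inj_eq val_inj).
case: eqP => // Hse; move: Hs; rewrite Hse; by case: e {Hse} => /= s' ->.
Qed.

Lemma Xent01 (X : vec R N) s : in_cube X -> 0 <= Xent X s <= 1.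
Proof. move=> HX; rewrite /Xent; case: insubP => [u _ _|_]; first exact: HX.
by rewrite lexx ler01. Qed.

Lemma prod_diff (I : Type) (r : seq I) (P : pred I) (F G : I -> R) :
  (forall i, P i -> 0 <= F i <= 1) -> (forall i, P i -> 0 <= G i <= 1) ->
  `|\prod_(i <- r | P i) F i - \prod_(i <- r | P i) G i|
     <= \sum_(i <- r | P i) `|F i - G i|.
Proof.
move=> HF HG; elim: r => [|a r IH]; first by rewrite !big_nil subrr normr0.
rewrite !big_cons; case: ifP => Pa //.
set A := \prod_(i <- r | P i) F i; set B := \prod_(i <- r | P i) G i.
have hA : `|A| <= 1.
  rewrite ger0_norm ?prodr_ile1 //.
  by apply: prodr_ge0 => i /HF /andP[].
have hb : `|G a| <= 1 by case/andP: (HG a Pa) => h1 h2; rewrite ger0_norm.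
have -> : F a * A - G a * B = (F a - G a) * A + G a * (A - B) by ring.
apply: (le_trans (ler_normD _ _)); rewrite !normrM lerD //.
  by rewrite -[X in _ <= X]mulr1 ler_wpM2l.
apply: (le_trans (y := 1 * `|A - B|)); last by rewrite mul1r.
by rewrite ler_wpM2r.
Qed.


Section Count.
Variable v : nat.
Variable h : {set 'I_v}.
Hypothesis h2 : #|h| = 2%N.
Local Notation Q := {ffun 'I_v -> 'I_N}.

Definition Kc (s : {set 'I_N}) := #|[set q : Q | injectiveb q && (q @: h == s)]|.

Lemma Kc_card (s : {set 'I_N}) : #|s| != 2%N -> Kc s = 0%N.
Proof.
move=> Hs; apply: eq_card0 => q; rewrite inE; apply/andP => -[/injectiveP qi /eqP E].
by move: Hs; rewrite -E card_imset // h2.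
Qed.

Lemma Kc_perm (sg : 'I_N -> 'I_N) (s : {set 'I_N}) : injective sg -> (Kc s <= Kc (sg @: s))%N.
Proof.
move=> sgi.
pose phi := fun q : Q => [ffun x => sg (q x)].
have phii : injective phi.
  move=> q1 q2 /ffunP E; apply/ffunP => x; move: (E x); rewrite !ffunE; exact: sgi.
rewrite /Kc -(card_imset [set q : Q | injectiveb q && (q @: h == s)] phii).
apply: subset_leq_card; apply/subsetP => _ /imsetP[q Hq ->].
rewrite inE in Hq; case/andP: Hq => /injectiveP qi /eqP Hs; rewrite inE; apply/andP; split.
  by apply/injectiveP => x y; rewrite !ffunE => /sgi; exact: qi.
rewrite -Hs -imset_comp; apply/eqP; apply: eq_imset => x; by rewrite /= ffunE.
Qed.

Definition sw (a b x : 'I_N) := if x == a then b else if x == b then a else x.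

Lemma swK a b : cancel (sw a b) (sw a b).
Proof.
move=> x; rewrite /sw.
case: (eqVneq x a) => [->|xa]; first by rewrite eqxx; case: eqP.
case: (eqVneq x b) => [->|xb]; first by rewrite eqxx.
by rewrite (negbTE xa) (negbTE xb).
Qed.

Lemma sw_inj a b : injective (sw a b). Proof. exact: can_inj (swK a b). Qed.
Lemma swL a b : sw a b a = b. Proof. by rewrite /sw eqxx. Qed.
Lemma swD a b z : z != a -> z != b -> sw a b z = z.
Proof. by move=> za zb; rewrite /sw (negbTE za) (negbTE zb). Qed.

Lemma trans2 (s t : {set 'I_N}) : #|s| == 2%N -> #|t| == 2%N ->
  exists2 sg : 'I_N -> 'I_N, injective sg & sg @: s = t.
Proof.
move=> /cards2P[a [b [ab ->]]] /cards2P[c [d [cd ->]]].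
set b' := sw a c b. exists (fun x => sw b' d (sw a c x)).
  by move=> x y /sw_inj /sw_inj.
rewrite imsetU1 imset_set1 /= swL.
have -> : sw b' d c = c.
  apply: swD; last by [].
  rewrite eq_sym.
  have : sw a c b != sw a c a by rewrite (inj_eq (@sw_inj a c)) eq_sym.
  by rewrite swL.
by rewrite swL.
Qed.

Lemma Kc_const (s t : {set 'I_N}) : #|s| == 2%N -> #|t| == 2%N -> Kc s = Kc t.
Proof.
move=> Hs Ht; apply/eqP; rewrite eqn_leq.
have [sg sgi E1] := trans2 Hs Ht; have [sg' sgi' E2] := trans2 Ht Hs.
apply/andP; split; [rewrite -E1 | rewrite -E2]; exact: Kc_perm.
Qed.

Lemma sum_inj (g : {set 'I_N} -> R) :
  \sum_(q : Q | injectiveb q) g (q @: h) = \sum_(s : {set 'I_N}) (Kc s)%:R * g s.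
Proof.
rewrite (partition_big (fun q : Q => q @: h) predT) //=.
apply: eq_bigr => s _.
rewrite (eq_bigr (fun _ => g s)); last by move=> q /andP[_ /eqP ->].
by rewrite sumr_const /Kc cardsE mulr_natl.
Qed.

Lemma count_lemma (g : {set 'I_N} -> R) :
  ('C(N, 2))%:R * \sum_(q : Q | injectiveb q) g (q @: h)
  = (N ^_ v)%:R * \sum_(e : upair N) g (val e).
Proof.
have tot : \sum_(s : {set 'I_N}) (Kc s)%:R = (N ^_ v)%:R :> R.
  rewrite (eq_bigr (fun s => (Kc s)%:R * 1)); last by move=> *; rewrite mulr1.
  rewrite -(sum_inj (fun _ => 1)).
  by rewrite sumr_const -cardsE card_inj_ffuns !card_ord.
rewrite sum_inj sum_upair.
case: (pickP (fun s : {set 'I_N} => #|s| == 2%N)) => [s0 Hs0|none]; last first.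
  rewrite [X in _ = _ * X]big_pred0 // mulr0 big1 ?mulr0 // => s _.
  by rewrite Kc_card ?none // mul0r.
rewrite (bigID (fun s : {set 'I_N} => #|s| == 2%N)) /= [X in _ * (_ + X)]big1; last first.
  by move=> s /negbTE Hs; rewrite Kc_card ?Hs // mul0r.
move: tot; rewrite (bigID (fun s : {set 'I_N} => #|s| == 2%N)) /= [X in _ + X]big1; last first.
  by move=> s /negbTE Hs; rewrite Kc_card ?Hs.
rewrite (eq_bigr (fun _ => (Kc s0)%:R)); last by move=> s Hs; rewrite (Kc_const Hs Hs0).
rewrite sumr_const -cardsE card_draws card_ord addr0 => <-.
rewrite addr0 (eq_bigr (fun s => (Kc s0)%:R * g s)); last by move=> s Hs; rewrite (Kc_const Hs Hs0).
rewrite -big_distrr /= -mulr_natl; ring.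
Qed.

End Count.

Lemma vec_sub (X Y : vec R N) e : (X - Y) e = X e - Y e.
Proof. by rewrite !ffunE. Qed.

Definition M (H : sgraph) (q : {ffun 'I_(gv H) -> 'I_N}) (Z : vec R N) : R :=
  \prod_(h in gE H) Xent Z (q @: h).

Definition dM (H : sgraph) (q : {ffun 'I_(gv H) -> 'I_N}) e (Z : vec R N) : R :=
  (M q (upd Z e 1) - M q (upd Z e 0)) / 2%:R.

Lemma claim (H : sgraph) (q : {ffun 'I_(gv H) -> 'I_N}) e (X Y : vec R N) :
  injective q -> in_cube X -> in_cube Y ->
  `|dM q e X - dM q e Y| <= \sum_(h in gE H) (q @: h == val e)%:R *
     (2%:R^-1 * \sum_(h' in gE H | h' != h) `|Xent X (q @: h') - Xent Y (q @: h')|).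
Proof.
move=> qi HX HY.
case: (pickP (fun h => (h \in gE H) && (q @: h == val e))) => [h0 /andP[h0E /eqP h0e] | none].
  have ME : forall Z c, M q (upd Z e c) = c * \prod_(h in gE H | h != h0) Xent Z (q @: h).
    move=> Z c; rewrite /M (bigD1 h0) //= Xent_upd ifT; last exact/eqP.
    congr (_ * _).
    apply: eq_bigr => h /andP[hE hne]; rewrite Xent_upd; case: eqP => // E.
    have E' : q @: h = q @: h0 := etrans E (esym h0e).
    by move: hne; rewrite (imset_inj qi E') eqxx.
  have hb : forall (b : bool) (T : R), b -> b%:R * T = T by move=> [] T // _; rewrite mul1r.
  have e10 : forall a b : R, (1 * a - 0 * b) = a by move=> a b; ring.
  rewrite /dM !ME !e10 [X in _ <= X](bigD1 h0) //=.
  rewrite [X in _ <= X + _]hb; last exact/eqP.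
  rewrite -mulrBl normrM mulrC ger0_norm ?invr_ge0 ?ler0n //.
  rewrite -[X in X <= _]addr0 lerD //.
    rewrite ler_wpM2l ?invr_ge0 ?ler0n //.
    by apply: prod_diff => i _; apply: Xent01.
  by apply: sumr_ge0 => h _; rewrite mulr_ge0 ?ler0n // mulr_ge0 ?invr_ge0 ?ler0n // sumr_ge0.
have ME : forall Z c, M q (upd Z e c) = M q Z.
  move=> Z c; apply: eq_bigr => h hE; rewrite Xent_upd.
  by have := none h; rewrite hE /= => ->.
rewrite /dM !ME !subrr ?mul0r ?subrr normr0.
by apply: sumr_ge0 => h _; rewrite mulr_ge0 ?ler0n // mulr_ge0 ?invr_ge0 ?ler0n // sumr_ge0.
Qed.

Lemma sum_e (s : {set 'I_N}) : \sum_(e : upair N) (s == val e)%:R <= 1 :> R.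
Proof.
case: (pickP (fun e : upair N => s == val e)) => [e0 He0 | none].
  rewrite (bigD1 e0) //= He0 big1 ?addr0 // => e ne.
  case: eqP => // E; move: ne; rewrite (eqP He0) in E.
  by rewrite (val_inj E) eqxx.
by rewrite big1 ?ler01 // => e _; rewrite none.
Qed.

Lemma grad_M_bound (H : sgraph) (q : {ffun 'I_(gv H) -> 'I_N}) (X Y : vec R N) :
  injective q -> in_cube X -> in_cube Y ->
  \sum_(e : upair N) `|dM q e X - dM q e Y| <= \sum_(h in gE H)
     (2%:R^-1 * \sum_(h' in gE H | h' != h) `|Xent X (q @: h') - Xent Y (q @: h')|).
Proof.
move=> qi HX HY; apply: le_trans (ler_sum _ (fun e _ => claim e qi HX HY)) _.
rewrite exchange_big /=; apply: ler_sum => h _; rewrite -mulr_suml.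
rewrite -[X in _ <= X]mul1r ler_wpM2r ?sum_e //.
by rewrite mulr_ge0 ?invr_ge0 ?ler0n // sumr_ge0.
Qed.


Lemma pair_count (T : finType) (E : {set T}) (c : R) :
  \sum_(h in E) \sum_(h' in E | h' != h) c = (#|E| * (#|E| - 1))%:R * c.
Proof.
rewrite (eq_bigr (fun _ => c *+ (#|E| - 1))); last first.
  move=> h hE; rewrite (eq_bigl (fun h' => h' \in E :\ h)) => [|h']; last by rewrite in_setD1 andbC.
  rewrite sumr_const; congr (_ *+ _); have := cardsD1 h E; rewrite hE /= add1n => ->.
  by rewrite subn1.
by rewrite sumr_const -mulrnA mulr_natl mulnC.
Qed.

Lemma graph_bound (H : sgraph) (beta : R) (X Y : vec R N) : in_cube X -> in_cube Y ->
  `|(N * (N - 1))%:R * beta / (N ^_ gv H)%:R| *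
   \sum_(q : {ffun 'I_(gv H) -> 'I_N} | injectiveb q) \sum_(e : upair N) `|dM q e X - dM q e Y|
  <= `|beta| * (nedges H * (nedges H - 1))%:R * norm1 (X - Y).
Proof.
move=> HX HY.
set P := N ^_ gv H.
have n1ge0 : 0 <= norm1 (X - Y) by apply: sumr_ge0.
have rhs0 : 0 <= `|beta| * (nedges H * (nedges H - 1))%:R * norm1 (X - Y).
  by rewrite !mulr_ge0 ?ler0n.
have [P0|Pn0] := eqVneq P 0%N.
  by rewrite P0 invr0 mulr0 normr0 mul0r.
set g := fun s : {set 'I_N} => `|Xent X s - Xent Y s|.
have S1 : \sum_(q : {ffun 'I_(gv H) -> 'I_N} | injectiveb q) \sum_(e : upair N) `|dM q e X - dM q e Y|
   <= \sum_(q : {ffun 'I_(gv H) -> 'I_N} | injectiveb q) \sum_(h in gE H)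
         (2%:R^-1 * \sum_(h' in gE H | h' != h) g (q @: h')).
  by apply: ler_sum => q /injectiveP qi; exact: grad_M_bound.
apply: (le_trans (ler_wpM2l (normr_ge0 _) S1)).
case: (set_0Vmem (gE H)) => [E0 | [h0 h0E]].
  rewrite big1 ?mulr0 // => q _; apply: big_pred0 => h; by rewrite E0 in_set0.
have C2n0 : ('C(N, 2))%:R != 0 :> R.
  rewrite pnatr_eq0 -lt0n bin_gt0.
  have := max_card (mem h0); rewrite gE2 // card_ord => h2.
  apply: leq_trans h2 _; by rewrite -ffact_gt0 lt0n.
have Hq : forall h', h' \in gE H ->
    \sum_(q : {ffun 'I_(gv H) -> 'I_N} | injectiveb q) g (q @: h')
    = P%:R * ('C(N, 2))%:R^-1 * norm1 (X - Y).
  move=> h' hE; apply: (mulfI C2n0); rewrite count_lemma ?gE2 //.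
  have -> : \sum_(e : upair N) g (val e) = norm1 (X - Y).
    by apply: eq_bigr => e _; rewrite /g !Xent_val vec_sub.
  by field.
rewrite exchange_big /=.
rewrite (eq_bigr (fun h => \sum_(h' in gE H | h' != h) (2%:R^-1 * (P%:R * ('C(N, 2))%:R^-1 * norm1 (X - Y))))); last first.
  move=> h hE; rewrite -big_distrr /= exchange_big /= big_distrr; apply: eq_bigr => h' /andP[h'E _].
  by rewrite Hq.
rewrite pair_count !normrM normfV !normr_nat.
have NN : (N * (N - 1))%:R = 2%:R * ('C(N, 2))%:R :> R.
  by rewrite -natrM -(mul_bin_diag N 1) bin1 subn1.
rewrite NN le_eqVlt; apply/orP; left; apply/eqP; rewrite /nedges.
have Pn0' : P%:R != 0 :> R by rewrite pnatr_eq0.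
have two : (2%:R : R) != 0 by rewrite pnatr_eq0.
by field; rewrite C2n0 Pn0'.
Qed.

End S.

Lemma lin4 (R : realFieldType) (I : finType) (P : pred I) (a b c d : I -> R) :
  ((\sum_(i | P i) a i - \sum_(i | P i) b i) / 2%:R
   - (\sum_(i | P i) c i - \sum_(i | P i) d i) / 2%:R)
  = \sum_(i | P i) ((a i - b i) / 2%:R - (c i - d i) / 2%:R).
Proof. by rewrite -!sumrB !mulr_suml -sumrB. Qed.

Unset Implicit Arguments.

Theorem lemma31 (R : realFieldType) (N l : nat) (beta : 'I_l -> R)
  (H : 'I_l -> sgraph) (X Y : vec R N) :
  in_cube X -> in_cube Y ->
  norm1 (grad (fcount beta H) X - grad (fcount beta H) Y)
    <= \sum_(i < l) `|beta i| * (nedges (H i) * (nedges (H i) - 1))%:R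
       * norm1 (X - Y).
Proof.
move=> HX HY.
pose C := fun i => (N * (N - 1))%:R * beta i / (N ^_ gv (H i))%:R.
have fE : forall Z, fcount beta H Z = \sum_(i < l)
    \sum_(q : {ffun 'I_(gv (H i)) -> 'I_N} | injectiveb q) C i * M q Z.
  move=> Z; rewrite /fcount big_distrr; apply: eq_bigr => i _.
  rewrite /tdens mulr_suml !big_distrr; apply: eq_bigr => q _; rewrite /C /M /=; ring.
have gE : forall e, (grad (fcount beta H) X - grad (fcount beta H) Y) e =
   \sum_(i < l) \sum_(q : {ffun 'I_(gv (H i)) -> 'I_N} | injectiveb q)
      C i * (dM q e X - dM q e Y).
  move=> e; rewrite !ffunE /dpart !fE lin4; apply: eq_bigr => i _.
  rewrite lin4; apply: eq_bigr => q _; rewrite /dM; ring.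
rewrite {1}/norm1.
apply: (le_trans (y := \sum_(e : upair N) \sum_(i < l)
   \sum_(q : {ffun 'I_(gv (H i)) -> 'I_N} | injectiveb q)
      `|C i| * `|dM q e X - dM q e Y|)).
  apply: ler_sum => e _; rewrite gE; apply: le_trans (ler_norm_sum _ _ _) _.
  apply: ler_sum => i _; apply: le_trans (ler_norm_sum _ _ _) _.
  by apply: ler_sum => q _; rewrite normrM.
rewrite exchange_big /=; apply: ler_sum => i _.
rewrite exchange_big /=.
under eq_bigr do rewrite -big_distrr /=.
rewrite -big_distrr /=.
exact: graph_bound.
Qed.
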